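(* Let $N\geq 2$ be an integer. For real $\theta$ and $\varepsilon\geq 0$ let $G_\theta(\varepsilon)=(1+\theta)^N+\big(1-\theta(1+\varepsilon)\big)^N-2$ and $\varepsilon_c(\theta)=\inf\{\varepsilon>0: G_\theta(\varepsilon)\leq 0\}$ (with $\inf\emptyset=+\infty$). For positive $\theta\neq 2^{1/N}-1$ define $$f(\theta)=\big(2-(1+\theta)^N\big)^{1/N}-1+\theta(1+\theta)^{N-1}\big(2-(1+\theta)^N\big)^{\frac1N-1}.$$ Then on the interval $0<\theta<2^{1/N}-1$ the function $\varepsilon_c$ is differentiable and monotonically increasing, with derivative $$\varepsilon_c'(\theta)=\frac{f(\theta)}{\theta^2}.$$
   Context: Root convention: for real $X>0$, $X^{1/N}$ is the positive real $N$-th root; for $X<0$ and $N$ odd, $X^{1/N}=-|X|^{1/N}$; and for an integer $m$, $X^{1/N-m}$ is defined as $Y^{1/N}$ with $Y=X^{1-mN}$, evaluated by the same convention. On the interval $0<\theta<2^{1/N}-1$ one has $2-(1+\theta)^N>0$, so all roots are ordinary positive roots. *)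

(* Defs.v *)
From Stdlib Require Import Reals Lra.
From Coquelicot Require Import Coquelicot.
Open Scope R_scope.

(* Real N-th root with the paper's convention:
   X>0: positive root; X<0, N odd: -|X|^(1/N); X = 0: 0
   (X<0, N even: undefined in the paper; we return 0, never used). *)
Definition nroot (N : nat) (X : R) : R :=
  if Rlt_dec 0 X then Rpower X (/ INR N)
  else if Rlt_dec X 0 then
         (if Nat.odd N then - Rpower (- X) (/ INR N) else 0)
  else 0.

(* X^(1/N - m) := (X^(1 - m N))^(1/N) *)
Definition nroot_shift (N : nat) (m : Z) (X : R) : R :=
  nroot N (powerRZ X (1 - m * Z.of_nat N)%Z).

Definition G (N : nat) (theta eps : R) : R :=
  (1 + theta) ^ N + (1 - theta * (1 + eps)) ^ N - 2.

Definition eps_c (N : nat) (theta : R) : Rbar :=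
  Glb_Rbar (fun eps => 0 < eps /\ G N theta eps <= 0).

Definition f_paper (N : nat) (theta : R) : R :=
  nroot N (2 - (1 + theta) ^ N) - 1
  + theta * (1 + theta) ^ (N - 1) * nroot_shift N 1 (2 - (1 + theta) ^ N).

Definition theta_max (N : nat) : R := nroot N 2 - 1.

(* Main.v *)
Require Import Defs.
From Stdlib Require Import Reals Lra Lia.
From Coquelicot Require Import Coquelicot.
Open Scope R_scope.

Lemma pow_lt_strict x y n : 0 <= x < y -> (0 < n)%nat -> x ^ n < y ^ n.
Proof.
  intros [Hx Hxy] Hn. induction n as [|n IH]; [lia|].
  destruct n as [|n]. simpl; lra.
  assert (H1 : x ^ S n < y ^ S n) by (apply IH; lia).
  assert (H2 : 0 < y ^ S n) by (apply pow_lt; lra).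
  assert (H3 : 0 <= x ^ S n) by (apply pow_le; lra).
  change (x * x ^ S n < y * y ^ S n). nra.
Qed.

Lemma young n x : 0 < x -> x <> 1 -> (1 <= n)%nat ->
  INR (S n) * x ^ n < INR n * x ^ (S n) + 1.
Proof.
  intros Hx Hx1 Hn.
  assert (Hk : forall k, (0 < k)%nat -> 0 < (x ^ k - 1) * (x - 1)).
  { intros k Hk. destruct (Rlt_dec x 1) as [Hl|Hl].
    - pose proof (pow_lt_1_compat x k ltac:(lra) Hk). nra.
    - assert (1 < x) by lra. pose proof (Rlt_pow_R1 x k H Hk). nra. }
  assert (Hall : forall m, 0 <= INR m * x ^ S m - INR (S m) * x ^ m + 1 /\
      ((1 <= m)%nat -> 0 < INR m * x ^ S m - INR (S m) * x ^ m + 1)).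
  { induction m as [|m [IH1 IH2]].
    - simpl. split; [lra| intros; lia].
    - assert (E : INR (S m) * x ^ S (S m) - INR (S (S m)) * x ^ S m + 1
                 = x * (INR m * x ^ S m - INR (S m) * x ^ m + 1)
                   + (x ^ S m - 1) * (x - 1)).
      { rewrite !S_INR. simpl. ring. }
      rewrite E. pose proof (Hk (S m) ltac:(lia)).
      assert (0 <= x * (INR m * x ^ S m - INR (S m) * x ^ m + 1)) by (apply Rmult_le_pos; lra).
      split; intros; lra. }
  destruct (Hall n) as [_ H]. specialize (H Hn). lra.
Qed.

Lemma convex_fact k t : 0 < t < 1 -> 2 < (1 + t) ^ S (S k) + (1 - t) ^ S (S k).
Proof.
  intros Ht. induction k as [|k IH].
  - simpl. nra.
  - assert (Hle : (1 - t) ^ S (S k) <= (1 + t) ^ S (S k)) by (apply pow_incr; lra).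
    change (2 < (1 + t) * (1 + t) ^ S (S k) + (1 - t) * (1 - t) ^ S (S k)). nra.
Qed.

Definition bb (N : nat) (t : R) : R := Rpower (2 - (1 + t) ^ N) (/ INR N).

Lemma INR_pos N : (2 <= N)%nat -> 0 < INR N.
Proof. intros; apply lt_0_INR; lia. Qed.

Lemma bb_pow N t : (2 <= N)%nat -> 0 < 2 - (1 + t) ^ N -> bb N t ^ N = 2 - (1 + t) ^ N.
Proof.
  intros HN HB. unfold bb. rewrite <- Rpower_pow by (unfold Rpower; apply exp_pos).
  rewrite Rpower_mult, Rinv_l by (pose proof (INR_pos N HN); lra).
  apply Rpower_1; auto.
Qed.

Lemma bb_pos N t : 0 < bb N t.
Proof. unfold bb, Rpower; apply exp_pos. Qed.

Lemma interval_facts N t : (2 <= N)%nat -> 0 < t < theta_max N ->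
  (1 + t) ^ N < 2 /\ t < 1 /\ 1 < (1 + t) ^ N.
Proof.
  intros HN Ht. unfold theta_max, nroot in Ht.
  destruct (Rlt_dec 0 2) as [_|n]; [|lra].
  assert (H1 : (1 + t) ^ N < Rpower 2 (/ INR N) ^ N) by (apply pow_lt_strict; lra || lia).
  rewrite <- (Rpower_pow N (Rpower 2 (/ INR N))) in H1 by (unfold Rpower; apply exp_pos).
  rewrite Rpower_mult, Rinv_l, Rpower_1 in H1 by (pose proof (INR_pos N HN); lra).
  assert (H2 : (1 + t) ^ 1 <= (1 + t) ^ N) by (apply Rle_pow; lra || lia).
  assert (H3 : 1 < (1 + t) ^ N) by (apply Rlt_pow_R1; lra || lia).
  simpl in H2. repeat split; lra.
Qed.

Lemma bb_lt N t : (2 <= N)%nat -> 0 < t < theta_max N -> bb N t < 1 - t.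
Proof.
  intros HN Ht. destruct (interval_facts N t HN Ht) as [HA [Ht1 HA1]].
  pose proof (bb_pow N t HN ltac:(lra)) as E. pose proof (bb_pos N t).
  destruct (Rlt_dec (bb N t) (1 - t)) as [h|h]; auto. exfalso.
  assert (h2 : (1 - t) ^ N <= bb N t ^ N) by (apply pow_incr; lra).
  destruct N as [|[|k]]; try lia.
  pose proof (convex_fact k t ltac:(lra)). lra.
Qed.

Lemma eps_c_eq N t : (2 <= N)%nat -> 0 < t < theta_max N ->
  eps_c N t = Finite ((1 - bb N t) / t - 1).
Proof.
  intros HN Ht. pose proof (bb_lt N t HN Ht) as Hb.
  destruct (interval_facts N t HN Ht) as [HA [Ht1 HA1]].
  pose proof (bb_pow N t HN ltac:(lra)) as E. pose proof (bb_pos N t) as Hbp.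
  unfold eps_c. apply is_glb_Rbar_unique. split.
  - intros e [He HG]. simpl. unfold G in HG.
    destruct (Rle_dec ((1 - bb N t) / t - 1) e) as [h|h]; auto. exfalso.
    assert (h1 : t * (1 + e) < 1 - bb N t).
    { apply Rnot_le_lt in h.
      assert (e + 1 < (1 - bb N t) / t) by lra.
      apply Rmult_lt_compat_l with (r := t) in H; [|lra].
      replace (t * ((1 - bb N t) / t)) with (1 - bb N t) in H by (field; lra). lra. }
    assert (bb N t ^ N < (1 - t * (1 + e)) ^ N) by (apply pow_lt_strict; lra || lia).
    lra.
  - intros l Hl. apply Hl. split.
    + assert (1 < (1 - bb N t) / t) by (apply Rmult_lt_reg_r with t; [lra|];
        unfold Rdiv; rewrite Rmult_assoc, Rinv_l; lra). lra.
    + unfold G. replace (1 - t * (1 + ((1 - bb N t) / t - 1))) with (bb N t) by (field; lra).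
      lra.
Qed.

Lemma f_eq N t : (2 <= N)%nat -> 0 < t < theta_max N ->
  f_paper N t = bb N t - 1 + t * (1 + t) ^ Nat.pred N * (bb N t / (2 - (1 + t) ^ N)).
Proof.
  intros HN Ht. destruct (interval_facts N t HN Ht) as [HA [Ht1 HA1]].
  assert (HB : 0 < 2 - (1 + t) ^ N) by lra.
  unfold f_paper, nroot_shift. rewrite powerRZ_Rpower by auto.
  unfold nroot. destruct (Rlt_dec 0 (2 - (1 + t) ^ N)) as [_|n]; [|lra].
  destruct (Rlt_dec 0 _) as [_|n]; [|exfalso; apply n; unfold Rpower; apply exp_pos].
  rewrite Rpower_mult, minus_IZR, mult_IZR, <- INR_IZR_INZ.
  replace ((IZR 1 - IZR 1 * INR N) * / INR N) with (/ INR N + - (1))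
    by (simpl; field; pose proof (INR_pos N HN); lra).
  rewrite Rpower_plus, Rpower_Ropp, Rpower_1 by auto.
  replace (N - 1)%nat with (Nat.pred N) by lia. unfold bb. reflexivity.
Qed.

Lemma f_pos N t : (2 <= N)%nat -> 0 < t < theta_max N -> 0 < f_paper N t.
Proof.
  intros HN Ht. rewrite f_eq by auto.
  destruct (interval_facts N t HN Ht) as [HA [Ht1 HA1]].
  pose proof (bb_lt N t HN Ht) as Hb. pose proof (bb_pos N t) as Hbp.
  pose proof (bb_pow N t HN ltac:(lra)) as E.
  destruct N as [|n]; [lia|]. simpl Nat.pred.
  set (b := bb (S n) t) in *. set (a := 1 + t) in *.
  change (b * b ^ n = 2 - a ^ S n) in E. change (a ^ S n) with (a * a ^ n) in *.
  assert (Hbn : 0 < b ^ n) by (apply pow_lt; lra).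
  assert (Hy1 := young n a ltac:(unfold a; lra) ltac:(unfold a; lra) ltac:(lia)).
  assert (Hy2 := young n b ltac:(lra) ltac:(lra) ltac:(lia)).
  change (a ^ S n) with (a * a ^ n) in Hy1. change (b ^ S n) with (b * b ^ n) in Hy2.
  rewrite E in Hy2.
  assert (Hs : a ^ n + b ^ n < 2).
  { rewrite S_INR in Hy1, Hy2. pose proof (pos_INR n). nra. }
  replace (b - 1 + t * a ^ n * (b / (2 - a * a ^ n))) with ((2 - a ^ n - b ^ n) / b ^ n).
  - apply Rdiv_lt_0_compat; lra.
  - rewrite <- E. unfold a in *. replace 2 with (b * b ^ n + (1 + t) * (1 + t) ^ n) at 1 by lra. field. split; lra.
Qed.

Theorem lemma2 (N : nat) (HN : (2 <= N)%nat) :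
  (* eps_c is finite on the interval *)
  (forall theta, 0 < theta < theta_max N ->
     eps_c N theta = Finite (real (eps_c N theta)))
  (* differentiable with derivative f(theta)/theta^2 *)
  /\ (forall theta, 0 < theta < theta_max N ->
        is_derive (fun t => real (eps_c N t)) theta (f_paper N theta / theta ^ 2))
  (* monotonically increasing *)
  /\ (forall t1 t2, 0 < t1 -> t1 < t2 -> t2 < theta_max N ->
        real (eps_c N t1) < real (eps_c N t2)).
Proof.
  assert (D : forall theta, 0 < theta < theta_max N ->
        is_derive (fun t => real (eps_c N t)) theta (f_paper N theta / theta ^ 2)).
  { intros th Ht.
    apply (is_derive_ext_loc (fun t => (1 - exp (/ INR N * ln (2 - (1 + t) ^ N))) / t - 1)).
    - assert (Hr : 0 < Rmin th (theta_max N - th)) by (apply Rmin_glb_lt; lra).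
      exists (mkposreal _ Hr). intros y Hy. simpl. unfold ball in Hy; simpl in Hy.
      unfold AbsRing_ball, abs, minus, plus, opp in Hy; simpl in Hy.
      assert (Hy' : 0 < y < theta_max N).
      { pose proof (Rmin_l th (theta_max N - th)). pose proof (Rmin_r th (theta_max N - th)).
        apply Rabs_def2 in Hy. lra. }
      rewrite (eps_c_eq N y HN Hy'). reflexivity.
    - destruct (interval_facts N th HN Ht) as [HA [Ht1 HA1]].
      rewrite f_eq by auto.
      auto_derive.
      + repeat split; lra.
      + change (2 + - (1 + th) ^ N) with (2 - (1 + th) ^ N).
        unfold bb, Rpower. pose proof (INR_pos N HN).
        field. repeat split; lra. }
  split; [|split; [exact D|]].
  - intros th Ht. rewrite (eps_c_eq N th HN Ht). reflexivity.
  - intros t1 t2 H1 H12 H2.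
    destruct (MVT_gen (fun t => real (eps_c N t)) t1 t2 (fun t => f_paper N t / t ^ 2))
      as [c [Hc E]].
    + intros x Hx. rewrite Rmin_left, Rmax_right in Hx by lra. apply D. lra.
    + intros x Hx. rewrite Rmin_left, Rmax_right in Hx by lra.
      apply continuity_pt_filterlim. apply (ex_derive_continuous (K := R_AbsRing) (V := R_NormedModule) (fun t => real (eps_c N t))).
      eexists. apply D. lra.
    + rewrite Rmin_left, Rmax_right in Hc by lra.
      assert (0 < f_paper N c / c ^ 2).
      { apply Rdiv_lt_0_compat. apply f_pos; auto; lra. apply pow_lt; lra. }
      assert (0 < f_paper N c / c ^ 2 * (t2 - t1)) by (apply Rmult_lt_0_compat; lra).
      lra.
Qed.
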